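(* There exist an environment $E$ and a total preorder $\succeq$ on $\Pi^E$ such that $\succeq\in\mathrm{Ord}_{\mathrm{FPR}}(E)$ but $\succeq\notin\mathrm{Ord}_{\mathrm{GOMORL}}(E)$.
   Context: An environment is a tuple $E=(\mathcal S,\mathcal A,\mathcal T,\mathcal I)$ where $\mathcal S,\mathcal A$ are finite nonempty sets, $\mathcal T:\mathcal S\times\mathcal A\to\Delta(\mathcal S)$ and $\mathcal I\in\Delta(\mathcal S)$. A policy is a map $\pi:\mathcal S\to\Delta(\mathcal A)$ (stationary, possibly stochastic); $\Pi^E$ denotes the set of all policies. A trajectory $\xi=(s_0,a_0,s_1,a_1,\dots)$ is generated under $\pi$ by $s_0\sim\mathcal I$, $a_t\sim\pi(s_t)$, $s_{t+1}\sim\mathcal T(s_t,a_t)$; $\mathbb E^\pi_\xi$ denotes expectation under this distribution. An objective-specification formalism $X$ assigns to each environment $E$ a set of objective specifications, each inducing a total preorder $\succeq$ on $\Pi^E$; $\mathrm{Ord}_X(E)$ is the set of total preorders so induced. A specification defining a scalar $J:\Pi^E\to\mathbb R$ induces $\pi_1\succeq\pi_2\iff J(\pi_1)\ge J(\pi_2)$. FPR: specification $(J)$ with $J:\Pi^E\to\mathbb R$ an arbitrary function. GOMORL: specification $(k,\mathcal R,\gamma,\succeq_J)$ with $k\in\mathbb N$, $\mathcal R:\mathcal S\times\mathcal A\times\mathcal S\to\mathbb R^k$ with components $\mathcal R_i$, $\gamma\in[0,1)$, $\succeq_J$ a total preorder on $\mathbb R^k$; with $\vec J(\pi)=(J_1(\pi),\dots,J_k(\pi))$,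 $J_i(\pi)=\mathbb E^\pi_\xi[\sum_{t=0}^\infty\gamma^t\mathcal R_i(s_t,a_t,s_{t+1})]$, it induces $\pi_1\succeq\pi_2\iff\vec J(\pi_1)\succeq_J\vec J(\pi_2)$. *)

(* Defs.v *)
From HB Require Import structures.
From mathcomp Require Import all_boot all_order all_algebra.
From mathcomp Require Import all_classical all_reals.
From mathcomp Require Import topology normedtype sequences.
Set Implicit Arguments. Unset Strict Implicit. Unset Printing Implicit Defensive.
Import Order.TTheory GRing.Theory Num.Theory.
Import numFieldNormedType.Exports.
Local Open Scope ring_scope.

Section Defs.
Variable R : realType.

Definition is_distr (T : finType) (f : {ffun T -> R}) : bool :=
  [forall x, 0 <= f x] && (\sum_x f x == 1).
Definition distr (T : finType) := {f : {ffun T -> R} | is_distr f}.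
Definition dval (T : finType) (d : distr T) : T -> R := fun x => proj1_sig d x.

Record env := Env {
  St : finType;
  Ac : finType;
  St_inh : St;
  Ac_inh : Ac;
  trans : St -> Ac -> distr St;
  init : distr St }.

Definition policy (E : env) := St E -> distr (Ac E).

Definition state_dist (E : env) (pi : policy E) : nat -> St E -> R :=
  fix sd (t : nat) : St E -> R :=
  match t with
  | 0 => dval (init E)
  | t'.+1 => fun s' => \sum_s \sum_a
        sd t' s * dval (pi s) a * dval (trans s a) s'
  end.

Definition exp_step_reward (E : env) (pi : policy E)
    (r : St E -> Ac E -> St E -> R) (t : nat) : R :=
  \sum_s \sum_a \sum_s'
    state_dist pi t s * dval (pi s) a * dval (trans s a) s' * r s a s'.

(* E^pi [ sum_t gamma^t r(s_t,a_t,s_{t+1}) ]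
   = sum_t gamma^t E^pi[r(s_t,a_t,s_{t+1})]  (bounded rewards, gamma < 1) *)
Definition disc_return (E : env) (pi : policy E)
    (r : St E -> Ac E -> St E -> R) (gamma : R) : R :=
  limn (series (fun t => gamma ^+ t * exp_step_reward pi r t)).

Definition total_preorder (T : Type) (le : T -> T -> Prop) : Prop :=
  (forall x, le x x) /\
  (forall x y z, le x y -> le y z -> le x z) /\
  (forall x y, le x y \/ le y x).

Definition induced_by (T : Type) (J : T -> R) (le : T -> T -> Prop) : Prop :=
  forall x y, le x y <-> J x >= J y.

Definition in_Ord_FPR (E : env) (le : policy E -> policy E -> Prop) : Prop :=
  exists J : policy E -> R, induced_by J le.

Definition in_Ord_GOMORL (E : env) (le : policy E -> policy E -> Prop) : Prop :=
  exists (k : nat) (rw : 'I_k -> St E -> Ac E -> St E -> R) (gamma : R)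
         (leJ : 'rV[R]_k -> 'rV[R]_k -> Prop),
    0 <= gamma < 1 /\ total_preorder leJ /\
    forall p q, le p q <->
      leJ (\row_i disc_return p (rw i) gamma) (\row_i disc_return q (rw i) gamma).

End Defs.

(* Main.v *)
Require Import Defs.
From mathcomp Require Import all_boot all_order all_algebra.
From mathcomp Require Import all_classical all_reals.
From mathcomp Require Import topology normedtype sequences.
Import Order.TTheory GRing.Theory Num.Theory.
Local Open Scope ring_scope.

Section S.
Variable R : realType.

Lemma dirac_ok (b : bool) : @is_distr R bool [ffun x => if x == b then 1 else 0].
Proof.
apply/andP; split.
  by apply/forallP => x; rewrite ffunE; case: (x == b).
by rewrite big_bool !ffunE; case: b => /=; rewrite ?addr0 ?add0r.
Qed.

Definition dirac (b : bool) : distr R bool := exist (fun f => is_distr f) _ (dirac_ok b).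

Definition E0 : env R := @Env R bool bool true true (fun _ _ => dirac true) (dirac true).

Lemma sum1 (pi : policy E0) s : \sum_a dval (pi s) a = 1.
Proof. rewrite /dval; case: (pi s) => f /= /andP [_ /eqP] //. Qed.

Lemma sd_eq (pi : policy E0) t s : state_dist pi t s = if s then 1 else 0.
Proof.
elim: t s => [|t IH] s /=.
  by rewrite /dval /= ffunE; case: s.
rewrite big_bool /= !IH.
rewrite [X in _ + X]big1 ?addr0; last by move=> a _; rewrite !mul0r.
under eq_bigr => a _ do rewrite mul1r.
rewrite -mulr_suml sum1 mul1r /dval /= ffunE; by case: s.
Qed.

Definition p : policy E0 := fun _ => dirac true.
Definition q : policy E0 := fun s => if s then dirac true else dirac false.
Definition J (pi : policy E0) : R := dval (pi false) true.

Lemma ret_eq r g : disc_return p r g = disc_return q r g.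
Proof.
rewrite /disc_return; f_equal; f_equal; f_equal; apply: funext => n.
congr (_ * _).
rewrite /exp_step_reward !big_bool /= !sd_eq.
by rewrite !mul0r.
Qed.

End S.

Theorem mainTheorem16 (R : realType) :
  exists (E : env R) (le : policy E -> policy E -> Prop),
    total_preorder le /\ in_Ord_FPR le /\ ~ in_Ord_GOMORL le.
Proof.
exists (E0 R), (fun x y => @J R y <= @J R x).
split; first split; last split.
- by move=> x.
- split; first by move=> x y z h1 h2; apply: le_trans h2 h1.
  by move=> x y; apply/orP; rewrite le_total.
- by exists (@J R) => x y.
- move=> [k [rw [g [leJ [_ [[refl _] H]]]]]].
  have : J R (p R) <= J R (q R).
    apply/(H (q R) (p R)).
    have -> : (\row_i disc_return (q R) (rw i) g) = (\row_i disc_return (p R) (rw i) g).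
      by apply/rowP => i; rewrite !mxE ret_eq.
    exact: refl.
  by rewrite /J /dval /= !ffunE /= ler10.
Qed.
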